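(* Let $\ell\ge 3$ be an integer and let $G$ be a finite graph containing no cycle of length $\ell$ as a subgraph. Then \[ t(G)\le \frac{1}{3}(\ell-3)\,e(G), \] where $e(G)$ is the number of edges of $G$.
   Context: All graphs are simple. $t(G)$ denotes the number of triangles ($K_3$ subgraphs) in $G$. *)

(* Defs.v *)
From mathcomp Require Import all_boot.
Set Implicit Arguments. Unset Strict Implicit. Unset Printing Implicit Defensive.

Definition simple_graph (T : finType) (e : rel T) : Prop :=
  symmetric e /\ irreflexive e.

Definition is_clique (T : finType) (e : rel T) (A : {set T}) : bool :=
  [forall x in A, forall y in A, (x != y) ==> e x y].

Definition num_edges (T : finType) (e : rel T) : nat :=
  #|[set A : {set T} | (#|A| == 2) && is_clique e A]|.

Definition num_triangles (T : finType) (e : rel T) : nat :=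
  #|[set A : {set T} | (#|A| == 3) && is_clique e A]|.

Definition has_cycle (T : finType) (e : rel T) (l : nat) : Prop :=
  exists f : nat -> T,
    {in [pred i | i < l] &, injective f} /\
    (forall i, i < l -> e (f i) (f (i.+1 %% l))).

(* Main.v *)
Require Import Defs.
From mathcomp Require Import all_boot.
From mathcomp Require Import zify.
From Stdlib Require Import Classical.
Set Implicit Arguments. Unset Strict Implicit. Unset Printing Implicit Defensive.

Section G.
Variables (T : finType) (e : rel T).
Hypothesis esym : symmetric e.
Hypothesis eirr : irreflexive e.

Lemma double_count (F : {set {set T}}) c : (forall A, A \in F -> #|A| = c) ->
  c * #|F| = \sum_a #|[set A in F | a \in A]|.
Proof.
move=> H.
rewrite mulnC -sum_nat_const.
transitivity (\sum_(A in F) #|A|).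
  by apply: eq_bigr => A /H ->.
transitivity (\sum_A \sum_a ((A \in F) && (a \in A) : nat)).
  rewrite big_mkcond /=; apply: eq_bigr => A _.
  case: (A \in F) => /=; last by rewrite big1.
  by rewrite -sum1_card big_mkcond.
rewrite exchange_big /=; apply: eq_bigr => a _.
rewrite -sum1_card [RHS]big_mkcond /=; apply: eq_bigr => A _.
by rewrite inE; case: (_ && _).
Qed.

Lemma cliqueP (A : {set T}) : reflect {in A &, forall x y, x != y -> e x y} (is_clique e A).
Proof.
apply: (iffP idP).
  move=> H x y xA yA nxy.
  by move: H => /forallP/(_ x)/implyP/(_ xA)/forallP/(_ y)/implyP/(_ yA)/implyP/(_ nxy).
move=> H; apply/forallP => x; apply/implyP => xA; apply/forallP => y.
apply/implyP => yA; apply/implyP; exact: H.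
Qed.

Lemma clique2 a b : a != b -> is_clique e [set a; b] = e a b.
Proof.
move=> nab; apply/cliqueP/idP => [H|eab x y].
  by apply: H; rewrite ?inE ?eqxx ?orbT.
rewrite !inE => /orP[]/eqP-> /orP[]/eqP->; by rewrite ?eqxx // => _; rewrite esym.
Qed.

Definition nb (S : {set T}) (a : T) : {set T} := [set b in S | e a b].
Definition D (S : {set T}) : nat := \sum_(a in S) #|nb S a|.
Definition E2 (S : {set T}) : {set {set T}} :=
  [set A : {set T} | [&& #|A| == 2, is_clique e A & A \subset S]].

Lemma neq_adj a b : e a b -> a != b.
Proof. by move=> eab; apply/eqP => ab; move: eab; rewrite ab eirr. Qed.

Lemma fiber2 (S : {set T}) a : a \in S ->
  [set A in E2 S | a \in A] = (fun b => [set a; b]) @: nb S a.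
Proof.
move=> aS; apply/setP => A; rewrite !inE; apply/idP/imsetP.
  case/andP => /and3P[/cards2P [x [y [nxy ->]]] cl sub] aA.
  have exy : e x y by move: cl; rewrite clique2.
  move: aA; rewrite !inE => /orP[]/eqP ->.
    by exists y => //; rewrite inE exy (subsetP sub) // !inE eqxx orbT.
  exists x; last by rewrite setUC.
  by rewrite inE esym exy (subsetP sub) // !inE eqxx.
case=> b; rewrite inE => /andP[bS eab] ->.
rewrite cards2 (neq_adj eab) clique2 ?(neq_adj eab) // eab !inE eqxx /= andbT.
by apply/subsetP => z; rewrite !inE => /orP[]/eqP->.
Qed.

Lemma twoE (S : {set T}) : 2 * #|E2 S| = D S.
Proof.
rewrite (double_count (c := 2)); last by move=> A; rewrite inE => /and3P[/eqP].
rewrite /D [RHS]big_mkcond /=; apply: eq_bigr => a _.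
case: ifP => aS.
  rewrite fiber2 // card_in_imset // => b c; rewrite !inE => /andP[_ eab] /andP[_ eac] E.
  have : b \in [set a; c] by rewrite -E !inE eqxx orbT.
  rewrite !inE => /orP[]/eqP // ba; by move: eab; rewrite ba eirr.
apply/eqP; rewrite cards_eq0; apply/eqP/setP => A; rewrite !inE.
apply/negP => /andP[/and3P[_ _ sub] aA]; by rewrite (subsetP sub _ aA) in aS.
Qed.


Definition Tri : {set {set T}} := [set A : {set T} | (#|A| == 3) && is_clique e A].

Lemma threeE : 3 * num_triangles e = \sum_v #|[set A in Tri | v \in A]|.
Proof.
by rewrite /num_triangles (double_count (c := 3)) // => A; rewrite inE => /andP[/eqP].
Qed.

Lemma edgesE : num_edges e = #|E2 setT|.
Proof.
by rewrite /num_edges; apply: eq_card => A; rewrite !inE subsetT andbT.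
Qed.

Lemma fiber3 v : #|[set A in Tri | v \in A]| = #|E2 (nb setT v)|.
Proof.
have -> : [set A in Tri | v \in A] = (fun B => v |: B) @: E2 (nb setT v).
  apply/setP => A; rewrite !inE; apply/idP/imsetP.
    case/andP => /andP[c3 cl] vA; exists (A :\ v); last by rewrite setD1K.
    rewrite inE; apply/and3P; split.
    - by move: c3; rewrite (cardsD1 v) vA.
    - apply/cliqueP => x y; rewrite !inE => /andP[_ xA] /andP[_ yA].
      exact: (elimT (cliqueP _) cl).
    - apply/subsetP => z; rewrite !inE => /andP[zv zA].
      by apply: (elimT (cliqueP _) cl) => //; rewrite eq_sym.
  case=> B; rewrite inE => /and3P[c2 cl sub] ->.
  have vB : v \notin B.
    by apply/negP => /(subsetP sub); rewrite !inE eirr.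
  rewrite !inE eqxx andbT cardsU1 vB (eqP c2) /=.
  apply/cliqueP => x y; rewrite !inE => /orP[/eqP->|xB] /orP[/eqP->|yB].
  - by rewrite eqxx.
  - by move=> _; move: (subsetP sub y yB); rewrite !inE.
  - by move=> _; move: (subsetP sub x xB); rewrite !inE esym.
  - exact: (elimT (cliqueP _) cl).
rewrite card_in_imset // => B C; rewrite !inE => /and3P[_ _ sB] /and3P[_ _ sC] E.
have vB : v \notin B by apply/negP => /(subsetP sB); rewrite !inE eirr.
have vC : v \notin C by apply/negP => /(subsetP sC); rewrite !inE eirr.
by rewrite -(setU1K vB) E setU1K.
Qed.


Lemma D_del (S : {set T}) v : v \in S -> D S <= D (S :\ v) + 2 * #|nb S v|.
Proof.
move=> vS; rewrite /D (bigD1 v) //=.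
have H : forall a, (a \in S) && (a != v) -> #|nb S a| = (e a v : nat) + #|nb (S :\ v) a|.
  move=> a /andP[aS av]; rewrite (cardsD1 v) !inE vS /=; congr (_ + _).
  by apply: eq_card => b; rewrite !inE andbA.
have E : \sum_(a in S :\ v) #|nb (S :\ v) a| = \sum_(a in S | a != v) #|nb (S :\ v) a|.
  by apply: eq_bigl => a; rewrite !inE andbC.
rewrite E (eq_bigr _ H) big_split /=.
suff : \sum_(a in S | a != v) (e a v : nat) <= #|nb S v| by lia.
rewrite -sum1_card [X in _ <= X]big_mkcond /= big_mkcond /=.
apply: leq_sum => a _; case: ifP => // /andP[aS _]; rewrite inE aS esym.
by case: (e v a).
Qed.

Lemma D_split (S C : {set T}) : C \subset S ->
  (forall z y, z \in C -> y \in S -> e z y -> y \in C) ->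
  D S = D C + D (S :\: C).
Proof.
move=> sub cl; rewrite /D (bigID (fun a => a \in C)) /=; congr (_ + _).
  rewrite (eq_bigl (fun a => a \in C)); last first.
    by move=> a; apply/andP/idP => [[]|aC] //; rewrite (subsetP sub).
  apply: eq_bigr => a aC; apply: eq_card => b; rewrite !inE.
  apply/andP/andP => [[bS eab]|[bC ->]]; last by rewrite (subsetP sub).
  by rewrite (cl a b).
rewrite (eq_bigl (fun a => a \in S :\: C)); last by move=> a; rewrite !inE andbC.
apply: eq_bigr => a; rewrite inE => /andP[aC aS]; apply: eq_card => b.
rewrite !inE; apply/andP/andP => [[bS eab]|[/andP[_ ->] //]].
split => //; apply/andP; split => //; apply/negP => bC.
by move: aC; rewrite (cl b a) // esym.
Qed.

Lemma D_bound (C : {set T}) : D C <= #|C| * (#|C| - 1).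
Proof.
rewrite /D -sum_nat_const; apply: leq_sum => a aC.
rewrite [X in _ <= X - 1](cardsD1 a) aC add1n subSS subn0; apply: subset_leq_card.

by apply/subsetP => b; rewrite !inE => /andP[bC eab]; rewrite bC andbT eq_sym (neq_adj eab).
Qed.


Definition good (S : {set T}) x s :=
  [&& uniq (x :: s), all (fun z => z \in S) (x :: s) & path e x s].

Lemma cyc_closed (S : {set T}) x s c : good S x s ->
  (forall y t, good S y t -> size t <= size s) ->
  perm_eq c (x :: s) -> cycle e c ->
  forall z y, z \in x :: s -> y \in S -> e z y -> y \in x :: s.
Proof.
move=> /and3P[U A P] Max pc cc z y zp yS ezy.
apply/negPn/negP => yn.
have zc : z \in c by rewrite (perm_mem pc).
case: (rot_to zc) => i t rE.
have mt : z :: t =i x :: s by move=> w; rewrite -rE mem_rot (perm_mem pc).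
have : good S y (z :: t).
  apply/and3P; split.
  - rewrite cons_uniq mt yn -rE rot_uniq (perm_uniq pc); exact: U.
  - apply/allP => w; rewrite in_cons => /orP[/eqP->//|]; rewrite mt; exact: (allP A).
  - have := cc; rewrite -(rot_cycle i) rE /= rcons_path => /andP[pt _].
    by rewrite /= esym ezy pt.
move/Max; rewrite /= -[(size t).+1]/(size (z :: t)) -rE size_rot (perm_size pc) /=.
by rewrite ltnn.
Qed.


Lemma cyc_exists (S : {set T}) x s : good S x s ->
  (forall y t, good S y t -> size t <= size s) ->
  size s < #|nb S x| + #|nb S (last x s)| ->
  exists c, perm_eq c (x :: s) /\ cycle e c.
Proof.
move=> g Max Hdeg; move: (g) => /and3P[U A P].
have Us : uniq s by move: U; rewrite cons_uniq => /andP[].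
have nbx : forall y, y \in nb S x -> y \in s.
  move=> y; rewrite inE => /andP[yS exy]; apply/negPn/negP => ys.
  have yx : y != x by rewrite eq_sym neq_adj.
  have : good S y (x :: s).
    rewrite /good cons_uniq U andbT in_cons negb_or yx ys /= yS esym exy P.
    by move: A => /= ->.
  by move/Max; rewrite /= ltnn.
have nbl : forall y, y \in nb S (last x s) -> (y \in x :: s) && (y != last x s).
  move=> y; rewrite inE => /andP[yS ely]; rewrite eq_sym neq_adj // andbT.
  apply/negPn/negP => yn.
  have : good S x (rcons s y).
    rewrite /good -rcons_cons rcons_uniq yn U all_rcons yS A rcons_path P ely.
    by [].
  by move/Max; rewrite size_rcons ltnn.
have idx : forall w, w \in x :: s -> w != last x s -> index w (x :: s) < size s.
  move=> w wp wl.
  have : index w (x :: s) < (size s).+1 by rewrite -[(size s).+1]/(size (x :: s)) index_mem.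
  rewrite ltnS leq_eqVlt => /orP[/eqP E|//].
  by move: wl; rewrite (last_nth x) -E nth_index // eqxx.
pose succ w := nth x s (index w (x :: s)).
pose R := [set succ w | w in nb S (last x s)].
have cardR : #|R| = #|nb S (last x s)|.
  apply: card_in_imset => w1 w2 /nbl/andP[w1p w1l] /nbl/andP[w2p w2l].
  rewrite /succ => /eqP; rewrite nth_uniq ?idx // => /eqP E.
  by rewrite -(nth_index x w1p) E nth_index.
have cardS : #|[set z in s]| = size s.
  by rewrite -(card_uniqP Us); apply: eq_card => z; rewrite inE.
have subR : R \subset [set z in s].
  apply/subsetP => z /imsetP[w /nbl/andP[wp wl] ->]; rewrite inE /succ mem_nth //.
  exact: idx.
have subQ : nb S x \subset [set z in s].
  by apply/subsetP => z /nbx; rewrite inE.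
case: (set_0Vmem (nb S x :&: R)) => [I0|[z]].
  have := cardsUI (nb S x) R; rewrite I0 cards0 addn0 cardR => E.
  have : #|nb S x :|: R| <= size s by rewrite -cardS subset_leq_card // subUset subQ subR.
  lia.
rewrite inE => /andP[zQ /imsetP[w wN zE]].
have zs : z \in s by exact: nbx.
move: (zQ) (wN); rewrite !inE => /andP[_ exz] /andP[_ elw].
move/nbl: wN => /andP[wp wl].
have Hi : index z s = index w (x :: s) by rewrite zE /succ index_uniq // idx.
have Hw : w = nth x (x :: s) (index z s) by rewrite Hi nth_index.
clear -esym eirr exz elw Hw U P zs.
move: Hw elw U P; case/splitPr: s / zs => s1 s2 Hw elw U P.
have zs1 : z \notin s1.
  by move: U; rewrite /= cat_uniq /= => /and4P[_ _ /norP[]].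
have Hw' : w = last x s1.
  rewrite Hw index_cat (negbTE zs1) /= eqxx addn0 -cat_cons nth_cat /= ltnSn.
  by rewrite (last_nth x).
exists (x :: s1 ++ rev (z :: s2)); split.
  by rewrite perm_cons perm_cat2l perm_rev.
move: P elw; rewrite cat_path last_cat /= => /and3P[P1 _ P2] elw.
rewrite /= rcons_cat cat_path P1 -Hw' rcons_path rev_cons last_rcons esym exz andbT /=.
have := rev_path e z (rcons s2 w); rewrite last_rcons belast_rcons rev_cons => ->.
rewrite (@eq_path _ _ e); last by move=> a b; rewrite esym.
by rewrite rcons_path P2 elw.
Qed.


Definition noP (S : {set T}) k := forall x s, good S x s -> size s < k.

Lemma good_sub (S S' : {set T}) x s : S' \subset S -> good S' x s -> good S x s.
Proof.
move=> sub /and3P[U A P]; apply/and3P; split => //.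
by apply/allP => z /(allP A); apply: (subsetP sub).
Qed.

Lemma noP_sub (S S' : {set T}) k : S' \subset S -> noP S k -> noP S' k.
Proof. by move=> sub nP x s g; apply: nP; apply: good_sub g. Qed.

Lemma exists_max (S : {set T}) k x0 s0 : noP S k -> good S x0 s0 ->
  exists x s, good S x s /\ forall y t, good S y t -> size t <= size s.
Proof.
move=> nP.
suff H : forall n x0 s0, k - size s0 <= n -> good S x0 s0 ->
  exists x s, good S x s /\ forall y t, good S y t -> size t <= size s.
  by apply: (H k); rewrite leq_subr.
elim=> [|n IH] x1 s1 hn g1;
  (destruct (classic (exists y t, good S y t /\ size s1 < size t)) as [[y [t [gt lt]]]|N];
   [|exists x1, s1; split => // y t gt; rewrite leqNgt; apply/negP => lt;
     by apply: N; exists y, t]).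
  by have := nP _ _ gt; lia.
apply: (IH y t) => //; have := nP _ _ gt; lia.
Qed.

Lemma EG k : 0 < k -> forall S, noP S k -> D S <= (k - 1) * #|S|.
Proof.
move=> k0.
suff H : forall n (S : {set T}), #|S| <= n -> noP S k -> D S <= (k - 1) * #|S|.
  by move=> S; exact: H.
elim=> [|n IH] S hS nP.
  by move: hS; rewrite leqn0 cards_eq0 => /eqP->; rewrite /D big_set0.
case: (boolP [exists v, (v \in S) && (2 * #|nb S v| < k)]) => [/existsP[v /andP[vS dv]]|Hall].
  have h1 := D_del vS.
  have h2 := cardsD1 v S; rewrite vS in h2.
  have h3 : D (S :\ v) <= (k - 1) * #|S :\ v|.
    apply: IH; first by lia.
    exact: noP_sub (subD1set S v) nP.
  nia.
have Hd : forall v, v \in S -> k <= 2 * #|nb S v|.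
  by move=> v vS; move/existsPn: Hall => /(_ v); rewrite vS /= -leqNgt.
case: (set_0Vmem S) => [->|[x0 x0S]]; first by rewrite /D big_set0.
have g0 : good S x0 [::] by rewrite /good /= x0S.
case: (exists_max nP g0) => x [s [g Max]].
move: (g) => /and3P[U A P].
have xS : x \in S by apply: (allP A); rewrite mem_head.
have lS : last x s \in S by apply: (allP A); rewrite mem_last.
have sk := nP _ _ g.
have Hdeg : size s < #|nb S x| + #|nb S (last x s)|.
  by have := Hd _ xS; have := Hd _ lS; lia.
case: (cyc_exists g Max Hdeg) => c [pc cc].
have cl := cyc_closed g Max pc cc.
pose C := [set z in x :: s].
have sub : C \subset S by apply/subsetP => z; rewrite inE; apply: (allP A).
have hs := D_split sub.
have cC : #|C| = (size s).+1.
  by rewrite -[(size s).+1]/(size (x :: s)) -(card_uniqP U); apply: eq_card => z; rewrite inE.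
have hC := D_bound C.
have hcard := cardsID C S; rewrite (setIidPr sub) in hcard.
have h3 : D (S :\: C) <= (k - 1) * #|S :\: C|.
  apply: IH; first by lia.
  exact: noP_sub (subsetDl S C) nP.
rewrite hs; last by move=> z y; rewrite !inE; exact: cl.
have : #|C| * (#|C| - 1) <= #|C| * (k - 1) by apply: leq_mul => //; lia.
nia.
Qed.

End G.

Unset Implicit Arguments.
Theorem lemma3p1 (T : finType) (e : rel T) (l : nat) :
  simple_graph e -> 3 <= l -> ~ has_cycle e l ->
  3 * num_triangles e <= (l - 3) * num_edges e.
Proof.
move=> [esym eirr] l3 nC.
pose k := l - 2.
have nP : forall v, noP e (nb e setT v) k.
  move=> v x s g; rewrite ltnNge; apply/negP => ks.
  apply: nC.
  have g' : good e (nb e setT v) x (take k s).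
    move: g => /and3P[U A P]; apply/and3P; split.
    - by have := take_uniq k.+1 U.
    - apply/allP => z; rewrite in_cons => /orP[/eqP->|/mem_take zs].
        by apply: (allP A); rewrite mem_head.
      by apply: (allP A); rewrite in_cons zs orbT.
    - exact: take_path.
  move: g'; set t := take k s => g'.
  have st : size t = k by rewrite size_takel.
  move: g' => /and3P[U A P].
  have adj : forall y, y \in x :: t -> e v y.
    by move=> y yt; have := allP A y yt; rewrite !inE.
  pose p := v :: x :: t.
  have sp : size p = l by rewrite /= st /k; lia.
  have Up : uniq p.
    rewrite /p cons_uniq U andbT; apply/negP => /adj; by rewrite eirr.
  exists (fun i => nth v p i); split.
    move=> i j; rewrite !inE => il jl /eqP; rewrite nth_uniq ?sp //; by move/eqP.
  move=> i il.
  case: (ltnP i.+1 l) => il2.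
    rewrite modn_small //.
    have : path e v (x :: t) by rewrite /= adj ?mem_head.
    move/(pathP v) => /(_ i); rewrite /p; apply.
    by move: il2; rewrite -sp.
  have -> : i.+1 = l by apply/eqP; rewrite eqn_leq il il2.
  rewrite modnn /= esym.
  have -> : i = (size t).+1 by rewrite st /k; lia.
  rewrite /=; apply: adj; apply: mem_nth; by rewrite /= st.
have hEG : forall v, D e (nb e setT v) <= (k - 1) * #|nb e setT v|.
  move=> v; apply: EG => //; rewrite /k; lia.
have tri : 2 * (3 * num_triangles e) <= (k - 1) * D e setT.
  rewrite threeE // big_distrr /D /= big_distrr /=.
  have -> : \sum_(a in [set: T]) (k - 1) * #|nb e [set: T] a| =
            \sum_a (k - 1) * #|nb e [set: T] a|.
    by apply: eq_bigl => a; rewrite inE.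
  apply: leq_sum => v _; rewrite fiber3 // twoE //; exact: hEG.
rewrite -twoE // -edgesE in tri.
have : k - 1 = l - 3 by rewrite /k; lia.
nia.
Qed.
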